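(* Let $d\ge1$, $z\ge0$, let $0<\varphi_1\le\cdots\le\varphi_d$ and let $\tilde v_1,\ldots,\tilde v_d\in\mathbb C$ be nonzero. For $\lambda>0$ with $\lambda\notin\{\varphi_1,\dots,\varphi_d\}$ define $$f(\lambda)=\lambda^2\sum_{m=1}^d\frac{\varphi_m|\tilde v_m|^2}{(\lambda-\varphi_m)^2}-\lambda+z,\qquad g(\lambda)=1-\sum_{m=1}^d\frac{\varphi_m|\tilde v_m|^2}{\lambda-\varphi_m}-\frac{z}{\lambda}-\log\lambda.$$ If $f$ has roots $0<\lambda_1\le\lambda_2$ both lying in an interval $(\varphi_{L-1},\varphi_L)$ for some $L$, then $g(\lambda_1)\ge g(\lambda_2)$.
   Context: Standing assumption of the paper for this lemma: all indices belong to the support $\mathcal S=\{m:\varphi_m|\tilde v_m|^2\ne0\}$, i.e. $\mathcal S=\{1,\ldots,d\}$. Here $\varphi_m$ are the eigenvalues of a Hermitian positive semi-definite matrix and $\tilde v_m$ the coordinates of a vector in its eigenbasis; $g(\lambda)$ is the value of the objective $\mathbf y^{\mathsf H}\mathbf y-\log((\mathbf y+\mathbf v)^{\mathsf H}\mathbf U(\mathbf y+\mathbf v)+z)$ at the stationary point associated with a root $\lambda$ of $f$ (this interpretation is not needed for the statement). *)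

(* Defs.v *)
From Stdlib Require Import Reals List.
From Coquelicot Require Import Coquelicot.
Import ListNotations.
Open Scope R_scope.

Definition sum1d (d : nat) (F : nat -> R) : R :=
  fold_right Rplus 0 (map F (seq 1 d)).

Definition f_fun (d : nat) (phi : nat -> R) (v : nat -> C) (z lam : R) : R :=
  lam ^ 2 * sum1d d (fun m => phi m * (Cmod (v m)) ^ 2 / (lam - phi m) ^ 2)
  - lam + z.

Definition g_fun (d : nat) (phi : nat -> R) (v : nat -> C) (z lam : R) : R :=
  1 - sum1d d (fun m => phi m * (Cmod (v m)) ^ 2 / (lam - phi m))
  - z / lam - ln lam.

(* Main.v *)
Require Import Defs.
From Stdlib Require Import Reals Lra Psatz List Lia.
From Coquelicot Require Import Coquelicot.
Open Scope R_scope.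
Definition uu (p x : R) := x / (x - p)^2.
Lemma conv_term p c x e : 0 < p -> 0 < c -> c <= x -> x <= e -> (p < c \/ e < p) ->
  (e - c) * uu p x <= (e - x) * uu p c + (x - c) * uu p e.
Proof.
  intros Hp Hc H1 H2 Hs. unfold uu.
  set (C := c - p). set (X := x - p). set (E := e - p).
  assert (HC : C <> 0) by (unfold C; lra).
  assert (HX : X <> 0) by (unfold X; lra).
  assert (HE : E <> 0) by (unfold E; lra).
  assert (Hid : (e - x) * (c / C^2) + (x - c) * (e / E^2) - (e - c) * (x / X^2)
     = (x-c)*(e-x)*(e-c)*(C*X*E + p*(X*E+C*E+C*X)) / (C*X*E)^2).
  { replace c with (C + p) by (unfold C; ring).
    replace x with (X + p) by (unfold X; ring).
    replace e with (E + p) by (unfold E; ring).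
    field. repeat split; auto. }
  assert (HS : (0 < C /\ 0 < X /\ 0 < E) \/ (-p < C < 0 /\ -p < X < 0 /\ -p < E < 0))
    by (unfold C, X, E; lra).
  clearbody C X E.
  assert (0 <= (x-c)*(e-x)*(e-c)*(C*X*E + p*(X*E+C*E+C*X)) / (C*X*E)^2).
  { assert (HP : C*X*E <> 0) by (repeat apply Rmult_integral_contrapositive_currified; auto).
    apply Rdiv_le_0_compat; [| destruct (Rlt_or_le 0 (C*X*E)); [apply pow_lt; auto| nra]].
    apply Rmult_le_pos; [apply Rmult_le_pos; [apply Rmult_le_pos|]|]; try lra.
    destruct HS as [[? [? ?]]|[? [? ?]]].
    -
      assert (0 < C*X) by nra. assert (0 < C*X*E) by nra. assert (0 < X*E) by nra. assert (0 < C*E) by nra.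
      assert (0 < p*(X*E+C*E+C*X)) by (apply Rmult_lt_0_compat; lra). lra.
    -       assert (0 < C*X) by nra. assert (0 < X*E) by nra. assert (0 < C*E) by nra.
      assert (C*X*E >= -p * (X * E)) by nra.
      assert (0 < p*(C*E+C*X)) by (apply Rmult_lt_0_compat; lra). nra. }
  lra.
Qed.
Definition Sl (l : list nat) (F : nat -> R) := fold_right Rplus 0 (map F l).

Lemma Sl_plus l F G : Sl l (fun m => F m + G m) = Sl l F + Sl l G.
Proof. induction l; unfold Sl in *; simpl; [ring| rewrite IHl; ring]. Qed.

Lemma Sl_scal l c F : c * Sl l F = Sl l (fun m => c * F m).
Proof. induction l; unfold Sl in *; simpl; [ring|]. rewrite <- IHl; ring. Qed.

Lemma Sl_ext l F G : (forall m, In m l -> F m = G m) -> Sl l F = Sl l G.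
Proof. induction l; intros H; unfold Sl in *; simpl; auto.
  rewrite H by (left; auto). rewrite IHl; auto. intros; apply H; right; auto. Qed.

Lemma Sl_le l F G : (forall m, In m l -> F m <= G m) -> Sl l F <= Sl l G.
Proof. induction l; intros H; unfold Sl in *; simpl; [lra|].
  apply Rplus_le_compat. apply H; left; auto. apply IHl; intros; apply H; right; auto. Qed.

Lemma Sl_derive l (F : nat -> R -> R) (F' : nat -> R) x :
  (forall m, In m l -> is_derive (F m) x (F' m)) ->
  is_derive (fun y => Sl l (fun m => F m y)) x (Sl l F').
Proof. induction l; intros H; unfold Sl in *; simpl.
  - apply (is_derive_const (K := R_AbsRing) (V := R_NormedModule) 0).
  - apply (is_derive_plus (F a) (fun y => fold_right Rplus 0 (map (fun m => F m y) l))).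
    apply H; left; auto. apply IHl; intros; apply H; right; auto. Qed.

Lemma conv_inv z c x e : 0 <= z -> 0 < c -> c <= x -> x <= e ->
  (e - c) * (z / x) <= (e - x) * (z / c) + (x - c) * (z / e).
Proof.
  intros. assert (Hid : (e - x) * (z / c) + (x - c) * (z / e) - (e - c) * (z / x)
    = z * ((x - c) * (e - x) * (e - c)) / (c * x * e)) by (field; repeat split; lra).
  assert (0 <= z * ((x - c) * (e - x) * (e - c)) / (c * x * e)).
  { apply Rdiv_le_0_compat. apply Rmult_le_pos; auto.
    apply Rmult_le_pos; [apply Rmult_le_pos|]; lra.
    apply Rmult_lt_0_compat; [apply Rmult_lt_0_compat|]; lra. }
  lra.
Qed.

Theorem lemma4 (d : nat) (z : R) (phi : nat -> R) (v : nat -> C)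
  (lam1 lam2 : R) :
  (1 <= d)%nat ->
  0 <= z ->
  0 < phi 1%nat ->
  (forall m : nat, (1 <= m)%nat -> (m < d)%nat -> phi m <= phi (S m)) ->
  (forall m : nat, (1 <= m)%nat -> (m <= d)%nat -> v m <> 0%C) ->
  0 < lam1 -> lam1 <= lam2 ->
  f_fun d phi v z lam1 = 0 ->
  f_fun d phi v z lam2 = 0 ->
  (exists L : nat, (1 <= L)%nat /\ (L <= S d)%nat /\
     (L = 1%nat \/ phi (pred L) < lam1) /\
     (L = S d \/ lam2 < phi L)) ->
  g_fun d phi v z lam1 >= g_fun d phi v z lam2.
Proof.
  intros Hd Hz Hp1 Hsort Hv Hl1 Hl12 Hf1 Hf2 [L [HL1 [HL2 [HL3 HL4]]]].
  destruct Hl12 as [Hlt | Heq]; [| subst; lra].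
  assert (Hmono : forall m n, (1 <= m)%nat -> (m <= n)%nat -> (n <= d)%nat -> phi m <= phi n).
  { intros m n Hm Hmn Hn. induction n.
    - lia.
    - destruct (Nat.eq_dec m (S n)). subst; lra.
      apply Rle_trans with (phi n). apply IHn; lia. apply Hsort; lia. }
  assert (Hm : forall m, In m (seq 1 d) -> 0 < phi m /\ (phi m < lam1 \/ lam2 < phi m)).
  { intros m Hin. apply in_seq in Hin.
    split. apply Rlt_le_trans with (phi 1%nat); auto. apply Hmono; lia.
    destruct (Compare_dec.le_lt_dec m (pred L)).
    - left. destruct HL3 as [HL3|HL3]; [lia|].
      apply Rle_lt_trans with (phi (pred L)); auto. apply Hmono; lia.
    - right. destruct HL4 as [HL4|HL4]; [lia|].
      apply Rlt_le_trans with (phi L); auto. apply Hmono; lia. }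
  set (a := fun m => phi m * Cmod (v m) ^ 2).
  assert (Ha : forall m, In m (seq 1 d) -> 0 <= a m).
  { intros m Hin. unfold a. apply Rmult_le_pos. destruct (Hm m Hin); lra.
    apply pow2_ge_0. }
  set (k := fun x => Sl (seq 1 d) (fun m => a m * uu (phi m) x) + z / x - 1).
  assert (Hfk : forall x, 0 < x -> f_fun d phi v z x = x * k x).
  { intros x Hx. unfold f_fun, k, sum1d. fold (Sl (seq 1 d) (fun m => phi m * Cmod (v m) ^ 2 / (x - phi m) ^ 2)).
    replace (x ^ 2 * Sl (seq 1 d) (fun m => phi m * Cmod (v m) ^ 2 / (x - phi m) ^ 2))
      with (x * (x * Sl (seq 1 d) (fun m => phi m * Cmod (v m) ^ 2 / (x - phi m) ^ 2))) by ring.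
    rewrite (Sl_scal _ x).
    rewrite (Sl_ext _ (fun m0 => x * (phi m0 * Cmod (v m0) ^ 2 / (x - phi m0) ^ 2))
      (fun m => a m * uu (phi m) x)).
    field. lra. intros m _. unfold a, uu. unfold Rdiv. ring. }
  assert (Hk1 : k lam1 = 0).
  { rewrite Hfk in Hf1 by lra. destruct (Rmult_integral _ _ Hf1); lra. }
  assert (Hk2 : k lam2 = 0).
  { rewrite Hfk in Hf2 by lra. destruct (Rmult_integral _ _ Hf2); lra. }
  assert (Hkneg : forall x, lam1 <= x <= lam2 -> k x <= 0).
  { intros x Hx.
    assert ((lam2 - lam1) * k x <= (lam2 - x) * k lam1 + (x - lam1) * k lam2).
    { unfold k. 
      assert (Sl (seq 1 d) (fun m => (lam2 - lam1) * (a m * uu (phi m) x)) <=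
              Sl (seq 1 d) (fun m => (lam2 - x) * (a m * uu (phi m) lam1) + (x - lam1) * (a m * uu (phi m) lam2))).
      { apply Sl_le. intros m Hin. destruct (Hm m Hin). pose proof (Ha m Hin).
        pose proof (conv_term (phi m) lam1 x lam2 ltac:(lra) ltac:(lra) ltac:(lra) ltac:(lra) ltac:(lra)).
        nra. }
      rewrite Sl_plus in H.
      rewrite <- (Sl_scal _ (lam2-lam1) (fun m => a m * uu (phi m) x)),
        <- (Sl_scal _ (lam2-x) (fun m => a m * uu (phi m) lam1)),
        <- (Sl_scal _ (x-lam1) (fun m => a m * uu (phi m) lam2)) in H.
      pose proof (conv_inv z lam1 x lam2 Hz Hl1 ltac:(lra) ltac:(lra)).
      lra. }
    rewrite Hk1, Hk2 in H. nra. }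
  set (dg := fun x => Sl (seq 1 d) (fun m => a m / (x - phi m) ^ 2) + z / x ^ 2 - 1 / x).
  assert (Hder : forall x, lam1 <= x <= lam2 -> is_derive (g_fun d phi v z) x (dg x)).
  { intros x Hx.
    assert (Hs : is_derive (fun y => Sl (seq 1 d) (fun m => phi m * Cmod (v m) ^ 2 / (y - phi m))) x
                  (Sl (seq 1 d) (fun m => - (a m / (x - phi m) ^ 2)))).
    { apply (Sl_derive (seq 1 d) (fun m y => phi m * Cmod (v m) ^ 2 / (y - phi m))).
      intros m Hin. destruct (Hm m Hin). unfold a. auto_derive. lra. field. lra. }
    assert (Hr : is_derive (fun y => 1 - z / y - ln y) x (z / x ^ 2 - 1 / x)).
    { auto_derive. lra. field. lra. }
    pose proof (is_derive_minus _ _ x _ _ Hr Hs) as H.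
    replace (dg x) with (minus (z / x ^ 2 - 1 / x)
       (Sl (seq 1 d) (fun m : nat => - (a m / (x - phi m) ^ 2)))).
    - eapply is_derive_ext; [| apply H].
      intros t. unfold g_fun, sum1d, minus, plus, opp. simpl. fold (Sl (seq 1 d) (fun m : nat => phi m * Cmod (v m) ^ 2 / (t - phi m))). unfold Sl; ring.
    - rewrite (Sl_ext _ _ (fun m => -1 * (a m / (x - phi m) ^ 2))) by (intros; ring).
      rewrite <- Sl_scal. unfold dg, minus, plus, opp. simpl. ring.
    }
  destruct (MVT_gen (g_fun d phi v z) lam1 lam2 dg) as [xi [Hxi Heq]].
  - intros x Hx. rewrite Rmin_left, Rmax_right in Hx by lra. apply Hder; lra.
  - intros x Hx. rewrite Rmin_left, Rmax_right in Hx by lra.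
    apply derivable_continuous_pt. exists (dg x). apply is_derive_Reals. apply Hder; lra.
  - rewrite Rmin_left, Rmax_right in Hxi by lra.
    assert (Hdg : dg xi * xi = k xi).
    { unfold dg, k.
      replace (Sl (seq 1 d) (fun m => a m * uu (phi m) xi)) with
        (xi * Sl (seq 1 d) (fun m => a m / (xi - phi m) ^ 2)).
      field. lra. rewrite Sl_scal. apply Sl_ext. intros m _. unfold uu, Rdiv. ring. }
    pose proof (Hkneg xi Hxi).
    assert (dg xi <= 0) by nra. nra.
Qed.
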